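(* Let $a\ge b\ge k$ be positive integers. Then $\operatorname{Im}(\gamma_k)\subseteq\operatorname{Im}(\theta_1)$, where $\theta_1:\Lambda^{a+1}\otimes\Lambda^{b-1}\to\Lambda^a\otimes\Lambda^b$.
   Context: $K$ is a field of characteristic zero, $G=GL(n,K)$, $V=K^n$, $\Lambda=\bigoplus_i\Lambda^i$ the exterior algebra of $V$. $m$ is multiplication (also written by juxtaposition) and $\Delta_{s,t}:\Lambda^{s+t}\to\Lambda^s\otimes\Lambda^t$ the comultiplication component $v_1\cdots v_{s+t}\mapsto\sum_\sigma\mathrm{sgn}(\sigma)v_{\sigma(1)}\cdots v_{\sigma(s)}\otimes v_{\sigma(s+1)}\cdots v_{\sigma(s+t)}$ (permutations increasing on the first $s$ and last $t$ positions). $\theta_1=(1\otimes m)\circ(\Delta_{a,1}\otimes1):\Lambda^{a+1}\otimes\Lambda^{b-1}\to\Lambda^a\otimes\Lambda^b$. $\beta_k:\Lambda^a\otimes\Lambda^k\otimes\Lambda^{b-k}\to\Lambda^a\otimes\Lambda^b$ is $(m\otimes m)\circ(1\otimes\tau\otimes1)\circ(\Delta_{a-k,k}\otimes1)$ with $\tau(w\otimes z)=z\otimes w$ on $\Lambda^k\otimes\Lambda^k$, and $\gamma_k(x\otimes y\otimes z)=x\otimes yz-\beta_k(x\otimes y\otimes z)$. *)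

(* Defs.v *)
From mathcomp Require Import all_boot all_order all_algebra.
Set Implicit Arguments. Unset Strict Implicit. Unset Printing Implicit Defensive.
Import GRing.Theory.
Local Open Scope ring_scope.

(* Exterior algebra of V = K^n with basis e_1..e_n.  Lambda^i has basis
   e_S = e_{s_1} ... e_{s_i} (s_1 < ... < s_i) for S : {set 'I_n}, #|S| = i.
   An element of Lambda (x) Lambda is a coefficient function
   {set 'I_n} -> {set 'I_n} -> K (coefficient of e_S (x) e_T);
   an element of Lambda (x) Lambda (x) Lambda is a function of three sets. *)

Section Ext.
Variables (K : fieldType) (n : nat).
Notation sT := {set 'I_n}.

Definition sgn2 (S T : sT) : K :=
  (-1) ^+ #|[set p : 'I_n * 'I_n | [&& p.1 \in S, p.2 \in T & (p.2 < p.1)%N]]|.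

(* structure constants of multiplication: e_S e_T = \sum_U mulc S T U e_U *)
Definition mulc (S T U : sT) : K :=
  if [&& [disjoint S & T] & U == S :|: T] then sgn2 S T else 0.

(* structure constants of Delta_{s,t} : Lambda^{s+t} -> Lambda^s (x) Lambda^t:
   Delta_{s,t}(e_U) = \sum_{P,Q} comc s t U P Q e_P (x) e_Q  (shuffles) *)
Definition comc (s t : nat) (U P Q : sT) : K :=
  if [&& #|U| == (s + t)%N, #|P| == s, P \subset U & Q == U :\: P]
  then sgn2 P Q else 0.

Definition hom2 (i j : nat) (x : sT -> sT -> K) : Prop :=
  forall S T, x S T != 0 -> #|S| = i /\ #|T| = j.
Definition hom3 (i j l : nat) (w : sT -> sT -> sT -> K) : Prop :=
  forall X Y Z, w X Y Z != 0 -> [/\ #|X| = i, #|Y| = j & #|Z| = l].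

(* theta_1 = (1 (x) m) o (Delta_{a,1} (x) 1) : Lambda^{a+1} (x) Lambda^{b-1}
   -> Lambda^a (x) Lambda^b, on coefficient functions *)
Definition theta1 (a : nat) (x : sT -> sT -> K) : sT -> sT -> K :=
  fun S V => \sum_(U : sT) \sum_(W : sT) \sum_(T : sT)
               x U W * comc a 1 U S T * mulc T W V.

(* beta_k = (m (x) m) o (1 (x) tau (x) 1) o (Delta_{a-k,k} (x) 1) *)
Definition beta (a k : nat) (w : sT -> sT -> sT -> K) : sT -> sT -> K :=
  fun S V => \sum_(X : sT) \sum_(Y : sT) \sum_(Z : sT)
     w X Y Z * \sum_(P : sT) \sum_(Q : sT)
                  comc (a - k) k X P Q * mulc P Y S * mulc Q Z V.

Definition gamma (a k : nat) (w : sT -> sT -> sT -> K) : sT -> sT -> K :=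
  fun S V => (\sum_(Y : sT) \sum_(Z : sT) w S Y Z * mulc Y Z V) - beta a k w S V.

End Ext.

(* Main.v *)
Require Import Defs.
From mathcomp Require Import all_boot all_order all_algebra.
From mathcomp Require Import ring zify.
Set Implicit Arguments. Unset Strict Implicit. Unset Printing Implicit Defensive.
Import GRing.Theory.
Local Open Scope ring_scope.

Section S.
Variables (K : fieldType) (n : nat).
Notation sT := {set 'I_n}.
Notation s := (@sgn2 K n).
Notation mulc := (@mulc K n).
Notation comc := (@comc K n).

Definition cnt (S T : sT) : nat := (\sum_(x in S) \sum_(y in T) (y < x)%N)%N.

Lemma sgn2E S T : s S T = (-1) ^+ cnt S T.
Proof.
rewrite /sgn2 /cnt; congr (_ ^+ _).
rewrite -sum1_card pair_big_dep /= [LHS]big_mkcond [RHS]big_mkcond /=.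
apply: eq_bigr => p _; rewrite inE.
by case: (p.1 \in S); case: (p.2 \in T); case: (p.2 < p.1)%N.
Qed.

Lemma cntUl (A B T : sT) : [disjoint A & B] -> cnt (A :|: B) T = (cnt A T + cnt B T)%N.
Proof.
move=> dAB; rewrite /cnt -bigU //=; apply: eq_bigl => x; by rewrite !inE.
Qed.

Lemma cntUr (A B T : sT) : [disjoint A & B] -> cnt T (A :|: B) = (cnt T A + cnt T B)%N.
Proof.
move=> dAB; rewrite /cnt -big_split /=; apply: eq_bigr => x _.
rewrite -bigU //=; apply: eq_bigl => y; by rewrite !inE.
Qed.

Lemma cnt0l (T : sT) : cnt set0 T = 0%N.
Proof. by rewrite /cnt big_set0. Qed.
Lemma cnt0r (T : sT) : cnt T set0 = 0%N.
Proof. by rewrite /cnt big1 // => x _; rewrite big_set0. Qed.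

Lemma cntC (S T : sT) : [disjoint S & T] -> (cnt S T + cnt T S)%N = (#|S| * #|T|)%N.
Proof.
move=> dST; rewrite /cnt [X in (_ + X)%N](exchange_big_dep (fun x => x \in S)) //=.
have -> : (\sum_(j in S) \sum_(i in T | j \in S) (j < i) = \sum_(x in S) \sum_(y in T) (x < y))%N.
  by apply: eq_big => // x xS; apply: eq_bigl => y; rewrite xS andbT. rewrite -big_split /=.
rewrite -sum1_card big_distrl /=; apply: eq_bigr => x xS.
rewrite -big_split /= -sum1_card mul1n; apply: eq_bigr => y yT.
have nxy : x != y by apply/eqP => exy; move/disjointFr: dST => /(_ x xS); rewrite exy yT.
by move: nxy; rewrite -(inj_eq val_inj) /=; case: (ltngtP (val x) (val y)).
Qed.

Lemma sgn2Ul (A B T : sT) : [disjoint A & B] -> s (A :|: B) T = s A T * s B T.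
Proof. by move=> d; rewrite !sgn2E cntUl // exprD. Qed.
Lemma sgn2Ur (A B T : sT) : [disjoint A & B] -> s T (A :|: B) = s T A * s T B.
Proof. by move=> d; rewrite !sgn2E cntUr // exprD. Qed.
Lemma sgn20l T : s set0 T = 1.
Proof. by rewrite sgn2E cnt0l. Qed.
Lemma sgn20r T : s T set0 = 1.
Proof. by rewrite sgn2E cnt0r. Qed.
Lemma sgn2_sq S T : s S T * s S T = 1.
Proof. by rewrite sgn2E -exprD addnn -mul2n exprM expr2 mulrNN mulr1 expr1n. Qed.
Lemma sgn2C (S T : sT) : [disjoint S & T] -> s S T * s T S = (-1) ^+ (#|S| * #|T|).
Proof. by move=> d; rewrite !sgn2E -exprD cntC. Qed.


Lemma dUl (A B C : sT) : [disjoint A :|: B & C] = [disjoint A & C] && [disjoint B & C].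
Proof. by rewrite !disjoints_subset subUset. Qed.
Lemma dUr (A B C : sT) : [disjoint C & A :|: B] = [disjoint C & A] && [disjoint C & B].
Proof. by rewrite ![[disjoint C & _]]disjoint_sym dUl. Qed.
Lemma d1l (u : 'I_n) (A : sT) : [disjoint [set u] & A] = (u \notin A).
Proof. exact: disjoints1. Qed.
Lemma d1r (u : 'I_n) (A : sT) : [disjoint A & [set u]] = (u \notin A).
Proof. by rewrite disjoint_sym disjoints1. Qed.

Lemma ds0r (A : sT) : [disjoint A & set0].
Proof. by rewrite disjoints_subset setC0 subsetT. Qed.
Lemma ds0l (A : sT) : [disjoint set0 & A].
Proof. by rewrite disjoints_subset sub0set. Qed.

Lemma cardUd (A B : sT) : [disjoint A & B] -> #|A :|: B| = (#|A| + #|B|)%N.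
Proof. by move=> d; rewrite cardsU (disjoint_setI0 d) cards0 subn0. Qed.

Definition t3 (Q R Z V : sT) : K :=
  if [&& [disjoint Q & R], [disjoint Q & Z], [disjoint R & Z] & V == Q :|: R :|: Z]
  then s Q R * s Q Z * s R Z else 0.

Lemma mulc_card A B U : mulc A B U != 0 -> #|U| = (#|A| + #|B|)%N.
Proof. by rewrite /mulc; case: andP => [[d /eqP ->] _|]; [rewrite cardUd | rewrite eqxx]. Qed.

Lemma t3_card Q R Z W : t3 Q R Z W != 0 -> #|W| = (#|Q| + #|R| + #|Z|)%N.
Proof.
rewrite /t3; case: and4P => [[d1 d2 d3 /eqP ->] _|]; last by rewrite eqxx.
by rewrite cardUd ?cardUd // dUl d2 d3.
Qed.

Lemma mulcA0 A S : mulc A set0 S = (S == A)%:R.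
Proof. by rewrite /mulc ds0r setU0 /= sgn20r; case: (S == A). Qed.
Lemma mulc0A A S : mulc set0 A S = (S == A)%:R.
Proof. by rewrite /mulc ds0l set0U /= sgn20l; case: (S == A). Qed.
Lemma t3_0m Q Z V : t3 Q set0 Z V = mulc Q Z V.
Proof.
rewrite /t3 /mulc ds0r ds0l setU0 sgn20r sgn20l mul1r mulr1 /=.
by case: ifP.
Qed.


Lemma setD1id (u : 'I_n) (B : sT) : u \notin B -> B :\ u = B.
Proof. by move=> h; apply/setP => x; rewrite !inE; case: eqP => // ->; rewrite (negbTE h). Qed.

Lemma eq_set1 (u v : 'I_n) : ([set u] == [set v]) = (u == v).
Proof. exact: (inj_eq set1_inj). Qed.

Lemma comc1 m (U S T : sT) : #|U| = m.+1 ->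
  comc m 1 U S T = \sum_u (T == [set u])%:R * ((u \in U) && (S == U :\ u))%:R * s (U :\ u) [set u].
Proof.
move=> cU; rewrite /comc cU addn1 eqxx /=.
have [/cards1P [v ->]|nT] := boolP (#|T| == 1%N).
  rewrite (bigD1 v) //= big1 ?addr0; last first.
    move=> w /negbTE h. by rewrite eq_set1 (eq_sym v) h !mul0r.
  rewrite eqxx mul1r.
  have -> : [&& #|S| == m, S \subset U & [set v] == U :\: S] = (v \in U) && (S == U :\ v).
    apply/and3P/andP => [[cS sSU /eqP e]|[vU /eqP ->]].
      have vU : v \in U by move: (set11 v); rewrite e inE => /andP[].
      split => //; apply/eqP; rewrite e setDDr setDv set0U; exact/esym/setIidPr.
    split; first by move: cU; rewrite (cardsD1 v U) vU add1n => -[] ->.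
      exact: subD1set.
    rewrite setDDr setDv set0U; apply/eqP/setP => x; rewrite !inE.
    by case: (x =P v) => [->|]; rewrite ?vU ?andbF.
  by case: andP => [[_ /eqP ->]|]; rewrite ?mul1r ?mul0r.
rewrite big1; last by move=> w _; rewrite (_ : (T == [set w]) = false) ?mul0r //; apply/negbTE; apply: contra nT => /eqP ->; rewrite cards1.
case: and3P => // [[/eqP cS sSU /eqP eT]].
by move: nT; rewrite eT cardsDS // cU cS subSnn.
Qed.


Lemma tR : (true%:R : K) = 1. Proof. by []. Qed.
Lemma fR : (false%:R : K) = 0. Proof. by []. Qed.

Lemma sgn2C1 (u : 'I_n) (B : sT) : u \notin B -> s [set u] B * s B [set u] = (-1) ^+ #|B|.
Proof. by move=> h; rewrite sgn2C ?d1l // cards1 mul1n. Qed.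
Lemma sgn2C1' (u : 'I_n) (B : sT) : u \notin B -> s B [set u] * s [set u] B = (-1) ^+ #|B|.
Proof. by move=> h; rewrite mulrC sgn2C1. Qed.

Lemma deriv m (A B S T : sT) : (#|A| + #|B|)%N = m.+1 ->
  \sum_U mulc A B U * comc m 1 U S T =
  \sum_u (T == [set u])%:R *
     ((u \in A)%:R * (-1) ^+ #|B| * s (A :\ u) [set u] * mulc (A :\ u) B S
      + (u \in B)%:R * s (B :\ u) [set u] * mulc A (B :\ u) S).
Proof.
move=> cAB.
have [dAB|nd] := boolP [disjoint A & B].
  rewrite (bigD1 (A :|: B)) //= big1 ?addr0; last first.
    by move=> U /negbTE h; rewrite /mulc h andbF mul0r.
  have cU : #|A :|: B| = m.+1 by rewrite cardUd.
  rewrite {1}/mulc dAB eqxx /= (comc1 _ _ cU) big_distrr /=; apply: eq_bigr => u _.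
  case: (T == [set u]); last by rewrite fR !mul0r mulr0.
  rewrite tR !mul1r.
  have [uA|nuA] := boolP (u \in A).
    have nuB : u \notin B by apply/negP => uB; move/disjointFr: dAB => /(_ u uA); rewrite uB.
    have dA'B : [disjoint A :\ u & B].
      by move: dAB; rewrite -{1}(setD1K uA) dUl => /andP[].
    rewrite (negbTE nuB) fR tR !mul0r addr0 mul1r in_setU uA /= /mulc dA'B /=.
    rewrite setDUl (setD1id nuB).
    case: (S == A :\ u :|: B); rewrite ?tR ?fR ?mul0r ?mulr0 //.
    rewrite !mul1r -{1}(setD1K uA) (@sgn2Ul [set u] (A :\ u) B); last by rewrite d1l setD11.
    rewrite sgn2Ul //.
    rewrite -(sgn2C1 nuB); ring.
  rewrite ?fR !mul0r add0r.
  have [uB|nuB] := boolP (u \in B); last by rewrite in_setU (negbTE nuA) (negbTE nuB) /= fR !mul0r mulr0.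
  have dAB' : [disjoint A & B :\ u].
    by move: dAB; rewrite -{1}(setD1K uB) dUr => /andP[].
  rewrite tR mul1r in_setU uB orbT /= /mulc dAB' /=.
  rewrite setDUl (setD1id nuA).
  case: (S == A :|: B :\ u); rewrite ?tR ?fR ?mul0r ?mulr0 //.
  rewrite !mul1r -{1}(setD1K uB) (@sgn2Ur [set u] (B :\ u) A); last by rewrite d1l setD11.
  rewrite sgn2Ul //.
  have tt := sgn2_sq A [set u].
  transitivity (s (B :\ u) [set u] * s A (B :\ u) * (s A [set u] * s A [set u])); first by ring.
  by rewrite tt mulr1.
rewrite big1; last by move=> U _; rewrite /mulc (negbTE nd) mul0r.
symmetry; apply: big1 => u _.
case: (T == [set u]); last by rewrite fR mul0r.
rewrite tR mul1r.
have [uA|nuA] := boolP (u \in A); have [uB|nuB] := boolP (u \in B).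
- have E1 : [disjoint A :\ u & B] = [disjoint A :\ u & B :\ u].
    by rewrite -{1}(setD1K uB) dUr d1r setD11.
  have E2 : [disjoint A & B :\ u] = [disjoint A :\ u & B :\ u].
    by rewrite -{1}(setD1K uA) dUl d1l setD11.
  have E3 : A :\ u :|: B = A :|: B :\ u.
    apply/setP => x; rewrite !inE; case: (x =P u) => [->|] /=; by rewrite ?uA ?uB ?orbT.
  rewrite /mulc E1 E2 E3 tR !mul1r.
  case: ifP => _; last by rewrite !mulr0 addr0.
  have sA'B : s (A :\ u) B = s (A :\ u) [set u] * s (A :\ u) (B :\ u).
    by rewrite -sgn2Ur ?setD1K // d1l setD11.
  have sAB' : s A (B :\ u) = s [set u] (B :\ u) * s (A :\ u) (B :\ u).
    by rewrite -sgn2Ul ?setD1K // d1l setD11.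
  rewrite sA'B sAB' (cardsD1 u B) uB add1n exprS -(sgn2C1' (negbT (setD11 u B))).
  have tt := sgn2_sq (A :\ u) [set u].
  transitivity ((- (s (A :\ u) [set u] * s (A :\ u) [set u]) + 1) *
     (s (B :\ u) [set u] * s [set u] (B :\ u) * s (A :\ u) (B :\ u))); first by ring.
  by rewrite tt addNr mul0r.
- have d : [disjoint A :\ u & B] = false.
    by apply/negbTE; apply: contra nd => d; rewrite -(setD1K uA) dUl d1l nuB d.
  by rewrite /mulc d /= ?tR ?fR !(mulr0, mul0r, addr0, add0r).
- have d : [disjoint A & B :\ u] = false.
    by apply/negbTE; apply: contra nd => d; rewrite -(setD1K uB) dUr d1r nuA d.
  by rewrite /mulc d /= ?tR ?fR !(mulr0, mul0r, addr0, add0r).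
- by rewrite fR !mul0r addr0.
Qed.


Lemma t3_sum (Q R Z : sT) (g : sT -> K) :
  \sum_W t3 Q R Z W * g W = t3 Q R Z (Q :|: R :|: Z) * g (Q :|: R :|: Z).
Proof.
rewrite (bigD1 (Q :|: R :|: Z)) //= big1 ?addr0 // => W /negbTE hW.
by rewrite /t3 hW !andbF mul0r.
Qed.

Lemma L4a (u : 'I_n) (Q R Z V : sT) : u \notin Q ->
  \sum_W t3 Q R Z W * mulc [set u] W V = s [set u] Q * t3 (u |: Q) R Z V.
Proof.
move=> uQ; rewrite t3_sum /t3 /mulc eqxx ?andbT ?dUl ?dUr ?d1l ?d1r ?in_setU.
rewrite (negbTE uQ) /= !setUA.
case dQR: [disjoint Q & R]; case dQZ: [disjoint Q & Z]; case dRZ: [disjoint R & Z];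
  case uR: (u \in R); case uZ: (u \in Z); rewrite /= ?mul0r ?mulr0 //.
case: (V == _); rewrite ?mulr0 //.
have d1Q : [disjoint [set u] & Q] by rewrite d1l.
have dQRZ : [disjoint Q :|: R & Z] by rewrite dUl dQZ dRZ.
rewrite (@sgn2Ur (Q :|: R) Z [set u]) // (@sgn2Ur Q R [set u]) //.
rewrite (@sgn2Ul [set u] Q R) // (@sgn2Ul [set u] Q Z) //.
ring.
Qed.

Lemma L4b (u : 'I_n) (Q R Z V : sT) : u \notin R ->
  \sum_W t3 Q R Z W * mulc [set u] W V = (-1) ^+ #|Q| * s [set u] R * t3 Q (u |: R) Z V.
Proof.
move=> uR; rewrite t3_sum /t3 /mulc eqxx ?andbT ?dUl ?dUr ?d1l ?d1r ?in_setU.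
rewrite (negbTE uR) /=.
have -> : Q :|: (u |: R) :|: Z = u |: (Q :|: R :|: Z).
  by rewrite !setUA (setUC Q [set u]).
case dQR: [disjoint Q & R]; case dQZ: [disjoint Q & Z]; case dRZ: [disjoint R & Z];
  case uQ: (u \in Q); case uZ: (u \in Z); rewrite /= ?mul0r ?mulr0 //.
case: (V == _); rewrite ?mulr0 //.
have d1R : [disjoint [set u] & R] by rewrite d1l uR.
have dQ1 : [disjoint Q & [set u]] by rewrite d1r uQ.
have dQRZ : [disjoint Q :|: R & Z] by rewrite dUl dQZ dRZ.
rewrite (@sgn2Ur (Q :|: R) Z [set u]) // (@sgn2Ur Q R [set u]) //.
rewrite (@sgn2Ur [set u] R Q) // (@sgn2Ul [set u] R Z) //.
rewrite -(sgn2C1' (negbT uQ)).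
have tt := sgn2_sq Q [set u].
transitivity (s Q R * s Q Z * s R Z * s [set u] Q * s [set u] R * s [set u] Z * (s Q [set u] * s Q [set u])); last by ring.
by rewrite tt mulr1; ring.
Qed.


Lemma sumI (I : finType) (P : pred I) (G : I -> K) :
  \sum_i (P i)%:R * G i = \sum_(i | P i) G i.
Proof. by rewrite [RHS]big_mkcond; apply: eq_bigr => i _; case: (P i); rewrite ?tR ?fR ?mul1r ?mul0r. Qed.

Lemma CB (u : 'I_n) (f : sT -> K) :
  \sum_(Q : sT) (u \notin Q)%:R * f (u |: Q) = \sum_(B : sT) (u \in B)%:R * f B.
Proof.
rewrite !sumI [RHS](reindex_onto (fun Q => u |: Q) (fun B => B :\ u)) /=; last first.
  by move=> B uB; rewrite setD1K.
apply: eq_bigl => Q; rewrite setU11 /=.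
apply/idP/eqP => [uQ|<-]; first by rewrite setU1K. by rewrite setD11.
Qed.

Lemma sum_card (B : sT) : \sum_(u : 'I_n) ((u \in B)%:R : K) = #|B|%:R.
Proof.
transitivity (\sum_(u : 'I_n) (u \in B)%:R * (1:K)); first by apply: eq_bigr => u _; rewrite mulr1.
by rewrite sumI -sum1_card natr_sum.
Qed.

Lemma R1 (X : sT) (j : nat) (H : sT -> K) :
  \sum_(Q : sT) \sum_(u : 'I_n) ((Q \subset X) && (#|Q| == j) && (u \in X :\: Q))%:R * H (u |: Q)
  = (j.+1)%:R * \sum_(Q : sT) ((Q \subset X) && (#|Q| == j.+1))%:R * H Q.
Proof.
rewrite exchange_big /=.
transitivity (\sum_(u : 'I_n) \sum_(B : sT) (u \in B)%:R * (((B \subset X) && (#|B| == j.+1))%:R * H B)).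
  apply: eq_bigr => u _; rewrite -CB; apply: eq_bigr => Q _.
  rewrite mulrA -natrM; congr (_ * _); congr (_ %:R).
  rewrite in_setD subUset sub1set cardsU1.
  by case: (u \in Q); case: (u \in X); case: (Q \subset X); rewrite /= ?andbT ?andbF ?mul1n ?mul0n ?add1n ?add0n ?eqSS.
rewrite exchange_big big_distrr /=; apply: eq_bigr => B _.
rewrite -big_distrl /= sum_card /=.
case: (#|B| =P j.+1) => [->|_] //; by rewrite andbF fR !mul0r !mulr0.
Qed.

Lemma R2 (Y : sT) (i : nat) (H : sT -> K) :
  \sum_(B : sT) \sum_(u : 'I_n) ((B \subset Y) && (#|B| == i.+1) && (u \in B))%:R * H (B :\ u)
  = (#|Y| - i)%:R * \sum_(A : sT) ((A \subset Y) && (#|A| == i))%:R * H A.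
Proof.
rewrite exchange_big /=.
transitivity (\sum_(u : 'I_n) \sum_(A : sT) (u \notin A)%:R * (((u |: A \subset Y) && (#|u |: A| == i.+1))%:R * H A)).
  apply: eq_bigr => u _.
  transitivity (\sum_(B : sT) (u \in B)%:R * (((B \subset Y) && (#|B| == i.+1))%:R * H (B :\ u))).
    apply: eq_bigr => B _; rewrite mulrA -natrM; congr (_ * _); congr (_ %:R).
    by case: (u \in B); rewrite ?andbT ?andbF ?mul1n ?mul0n.
  rewrite -(CB u (fun B => ((B \subset Y) && (#|B| == i.+1))%:R * H (B :\ u)))/=; apply: eq_bigr => A _.
  by case uA: (u \in A); rewrite /= ?fR ?mul0r // setU1K ?uA.
rewrite exchange_big big_distrr /=; apply: eq_bigr => A _.
transitivity ((\sum_(u : 'I_n) ((u \in Y :\: A) : nat)%:R) * (((A \subset Y) && (#|A| == i))%:R * H A)).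
  rewrite big_distrl /=; apply: eq_bigr => u _.
  rewrite !mulrA -!natrM; congr (_ * _); congr (_ %:R).
  rewrite in_setD subUset sub1set cardsU1.
  by case: (u \in A); case: (u \in Y); case: (A \subset Y); rewrite /= ?andbT ?andbF ?mul1n ?mul0n ?muln0 ?muln1 ?add1n ?add0n ?eqSS.
rewrite sum_card.
case: andP => [[sAY /eqP cA]|]; last by rewrite fR !mul0r !mulr0.
by rewrite tR mul1r cardsDS // cA.
Qed.


Lemma theta1_gen (a : nat) (I : finType) (c : I -> K) (p q : I -> sT -> K) (S V : sT) :
  theta1 a (fun U W => \sum_i c i * (p i U * q i W)) S V =
  \sum_i c i * \sum_(T : sT) (\sum_(U : sT) p i U * comc a 1 U S T) * (\sum_(W : sT) q i W * mulc T W V).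
Proof.
rewrite /theta1.
transitivity (\sum_(U : sT) \sum_(W : sT) \sum_(T : sT) \sum_i
   c i * (p i U * comc a 1 U S T) * (q i W * mulc T W V)).
  apply: eq_bigr => U _; apply: eq_bigr => W _; apply: eq_bigr => T _.
  rewrite !big_distrl; apply: eq_bigr => i _ /=; ring.
transitivity (\sum_i \sum_(T : sT) \sum_(U : sT) \sum_(W : sT)
   c i * (p i U * comc a 1 U S T) * (q i W * mulc T W V)); last first.
  apply: eq_bigr => i _; rewrite big_distrr; apply: eq_bigr => T _ /=.
  rewrite big_distrl big_distrr; apply: eq_bigr => U _ /=.
  rewrite big_distrr big_distrr; apply: eq_bigr => W _ /=; ring.
under eq_bigr => U _ do under eq_bigr => W _ do rewrite exchange_big.
under eq_bigr => U _ do rewrite exchange_big.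
rewrite exchange_big; apply: eq_bigr => i _.
under eq_bigr => U _ do rewrite exchange_big.
by rewrite exchange_big.
Qed.


Lemma sum_single (D : 'I_n -> K) (E : sT -> K) :
  \sum_(T : sT) (\sum_(u : 'I_n) (T == [set u])%:R * D u) * E T = \sum_(u : 'I_n) D u * E [set u].
Proof.
under eq_bigr => T _ do rewrite big_distrl.
rewrite exchange_big; apply: eq_bigr => u _ /=.
rewrite (bigD1 [set u]) //= big1 ?addr0; first by rewrite eqxx tR mul1r.
by move=> T /negbTE h; rewrite h fR !mul0r.
Qed.

Definition Fc (X Y : sT) (j i : nat) (Q Y1 : sT) : K :=
  ((Q \subset X) && (#|Q| == j))%:R * ((Y1 \subset Y) && (#|Y1| == i))%:R *
  (s (X :\: Q) Q * s Y1 (Y :\: Y1)).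

Definition F (X Y Z : sT) (j i : nat) (S V : sT) : K :=
  \sum_(x : sT * sT) Fc X Y j i x.1 x.2 * (mulc (X :\: x.1) x.2 S * t3 x.1 (Y :\: x.2) Z V).

Definition D1 (X Y Z : sT) (j : nat) (S V Q Y1 : sT) (u : 'I_n) : K :=
  (u \in X :\: Q)%:R * (-1) ^+ j.+1 * s ((X :\: Q) :\ u) [set u] * mulc ((X :\: Q) :\ u) Y1 S
      * (s [set u] Q * t3 (u |: Q) (Y :\: Y1) Z V).
Definition D2 (X Y Z : sT) (j : nat) (S V Q Y1 : sT) (u : 'I_n) : K :=
  (u \in Y1)%:R * s (Y1 :\ u) [set u] * mulc (X :\: Q) (Y1 :\ u) S
      * ((-1) ^+ j * s [set u] (Y :\: Y1) * t3 Q (u |: (Y :\: Y1)) Z V).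

Lemma stepA (X Y Z : sT) (a j : nat) S V : #|X| = a -> (j <= a)%N ->
  theta1 a (F X Y Z j j.+1) S V =
  \sum_(x : sT * sT) Fc X Y j j.+1 x.1 x.2 * \sum_(u : 'I_n)
   (D1 X Y Z j S V x.1 x.2 u + D2 X Y Z j S V x.1 x.2 u).
Proof.
move=> cX ja.
rewrite /D1 /D2 /F (theta1_gen a (fun x => Fc X Y j j.+1 x.1 x.2) (fun x U => mulc (X :\: x.1) x.2 U)
   (fun x W => t3 x.1 (Y :\: x.2) Z W)).
apply: eq_bigr => -[Q Y1] _ /=.
rewrite /Fc /=.
case cQ: ((Q \subset X) && (#|Q| == j)); last by rewrite fR !mul0r.
case cY1: ((Y1 \subset Y) && (#|Y1| == j.+1)); last by rewrite fR !(mul0r, mulr0).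
move/andP: cQ => [sQX /eqP cQ]; move/andP: cY1 => [sY1 /eqP cY1].
congr (_ * _).
have HH : (#|X :\: Q| + #|Y1|)%N = a.+1 by rewrite cardsDS // cX cQ cY1 addnS subnK.
under eq_bigr => T _ do rewrite (deriv S T HH).
rewrite sum_single; apply: eq_bigr => u _.
rewrite mulrDl cY1; congr (_ + _).
  case uP: (u \in X :\: Q); last by rewrite fR !mul0r.
  have uQ : u \notin Q by move: uP; rewrite in_setD => /andP[].
  by rewrite L4a.
case uY: (u \in Y1); last by rewrite fR !mul0r.
by rewrite L4b ?in_setD ?uY // cQ.
Qed.


Lemma part1 (X Y Z : sT) (j : nat) S V :
  \sum_(x : sT * sT) \sum_(u : 'I_n) Fc X Y j j.+1 x.1 x.2 * D1 X Y Z j S V x.1 x.2 u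
  = (-1) ^+ j.+1 * (j.+1)%:R * F X Y Z j.+1 j.+1 S V.
Proof.
rewrite -(pair_bigA _ (fun Q Y1 => \sum_(u : 'I_n) Fc X Y j j.+1 Q Y1 * D1 X Y Z j S V Q Y1 u)).
rewrite /F -(pair_bigA _ (fun Q Y1 => Fc X Y j.+1 j.+1 Q Y1 * (mulc (X :\: Q) Y1 S * t3 Q (Y :\: Y1) Z V))).
rewrite exchange_big [in RHS]exchange_big big_distrr /=; apply: eq_bigr => Y1 _.
pose H := fun Q' => ((Y1 \subset Y) && (#|Y1| == j.+1))%:R * ((-1) ^+ j.+1 *
   (s (X :\: Q') Q' * s Y1 (Y :\: Y1)) * (mulc (X :\: Q') Y1 S * t3 Q' (Y :\: Y1) Z V)).
transitivity (\sum_(Q : sT) \sum_(u : 'I_n) ((Q \subset X) && (#|Q| == j) && (u \in X :\: Q))%:R * H (u |: Q)).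
  apply: eq_bigr => Q _; apply: eq_bigr => u _.
  case uP: (u \in X :\: Q); last by rewrite /D1 uP andbF fR !(mul0r, mulr0).
  rewrite andbT /D1 uP tR mul1r /H /Fc.
  have uQ : u \notin Q by move: uP; rewrite in_setD => /andP[].
  have E : (X :\: Q) :\ u = X :\: (u |: Q).
    by apply/setP => x; rewrite !inE negb_or andbA.
  have uP' : u \notin X :\: (u |: Q) by rewrite in_setD setU11.
  have e1 : X :\: Q = u |: (X :\: (u |: Q)) by rewrite -E setD1K.
  have hs1 : s (X :\: Q) Q = s [set u] Q * s (X :\: (u |: Q)) Q.
    by rewrite {1}e1 sgn2Ul // d1l.
  have hs2 : s (X :\: (u |: Q)) (u |: Q) = s (X :\: (u |: Q)) [set u] * s (X :\: (u |: Q)) Q.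
    by rewrite sgn2Ur // d1l.
  rewrite E hs1 hs2.
  have tt := sgn2_sq [set u] Q.
  set A1 := s [set u] Q.
  transitivity (((Q \subset X) && (#|Q| == j))%:R * (((Y1 \subset Y) && (#|Y1| == j.+1))%:R *
   ((-1) ^+ j.+1 * (s (X :\: (u |: Q)) [set u] * s (X :\: (u |: Q)) Q * s Y1 (Y :\: Y1)) *
    (mulc (X :\: (u |: Q)) Y1 S * t3 (u |: Q) (Y :\: Y1) Z V))) * (A1 * A1)); first by ring.
  by rewrite tt mulr1.
rewrite R1 big_distrr /= big_distrr; apply: eq_bigr => Q _ /=.
rewrite /H /Fc; ring.
Qed.


Lemma part2 (X Y Z : sT) (j : nat) S V :
  \sum_(x : sT * sT) \sum_(u : 'I_n) Fc X Y j j.+1 x.1 x.2 * D2 X Y Z j S V x.1 x.2 u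
  = (-1) ^+ j * (#|Y| - j)%:R * F X Y Z j j S V.
Proof.
rewrite -(pair_bigA _ (fun Q Y1 => \sum_(u : 'I_n) Fc X Y j j.+1 Q Y1 * D2 X Y Z j S V Q Y1 u)).
rewrite /F -(pair_bigA _ (fun Q Y1 => Fc X Y j j Q Y1 * (mulc (X :\: Q) Y1 S * t3 Q (Y :\: Y1) Z V))).
rewrite big_distrr /=; apply: eq_bigr => Q _.
pose H := fun A => ((Q \subset X) && (#|Q| == j))%:R * ((-1) ^+ j *
   (s (X :\: Q) Q * s A (Y :\: A)) * (mulc (X :\: Q) A S * t3 Q (Y :\: A) Z V)).
transitivity (\sum_(B : sT) \sum_(u : 'I_n) ((B \subset Y) && (#|B| == j.+1) && (u \in B))%:R * H (B :\ u)).
  apply: eq_bigr => Y1 _; apply: eq_bigr => u _.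
  case uY1: (u \in Y1); last by rewrite /D2 uY1 andbF fR !(mul0r, mulr0).
  case sY1: (Y1 \subset Y); last by rewrite /Fc sY1 /= fR !(mul0r, mulr0).
  rewrite andbT /D2 uY1 tR mul1r /H /Fc sY1 /=.
  have uY : u \in Y by apply: (subsetP sY1).
  have E2 : Y :\: (Y1 :\ u) = u |: (Y :\: Y1).
    apply/setP => x; rewrite !inE; case: (x =P u) => [->|] /=; first by rewrite uY.
    by rewrite andbC.
  have uY2 : u \notin Y :\: Y1 by rewrite in_setD uY1.
  have hs3 : s Y1 (Y :\: Y1) = s [set u] (Y :\: Y1) * s (Y1 :\ u) (Y :\: Y1).
    by rewrite -{1}(setD1K uY1) sgn2Ul // d1l setD11.
  have hs4 : s (Y1 :\ u) (u |: (Y :\: Y1)) = s (Y1 :\ u) [set u] * s (Y1 :\ u) (Y :\: Y1).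
    by rewrite sgn2Ur // d1l.
  rewrite E2 hs3 hs4.
  have tt := sgn2_sq [set u] (Y :\: Y1).
  set A1 := s [set u] (Y :\: Y1).
  transitivity (((Q \subset X) && (#|Q| == j))%:R * (#|Y1| == j.+1)%:R *
   ((-1) ^+ j * (s (X :\: Q) Q * (s (Y1 :\ u) [set u] * s (Y1 :\ u) (Y :\: Y1))) *
    (mulc (X :\: Q) (Y1 :\ u) S * t3 Q (u |: (Y :\: Y1)) Z V)) * (A1 * A1)); first by ring.
  by rewrite tt mulr1; ring.
rewrite R2 big_distrr /= big_distrr; apply: eq_bigr => A _ /=.
rewrite /H /Fc; ring.
Qed.


Lemma thetaF (X Y Z : sT) (a j : nat) S V : #|X| = a -> (j <= a)%N ->
  theta1 a (F X Y Z j j.+1) S V =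
  (-1) ^+ j * ((#|Y| - j)%:R * F X Y Z j j S V - (j.+1)%:R * F X Y Z j.+1 j.+1 S V).
Proof.
move=> cX ja; rewrite stepA //.
transitivity (\sum_(x : sT * sT) \sum_(u : 'I_n) Fc X Y j j.+1 x.1 x.2 * D1 X Y Z j S V x.1 x.2 u
  + \sum_(x : sT * sT) \sum_(u : 'I_n) Fc X Y j j.+1 x.1 x.2 * D2 X Y Z j S V x.1 x.2 u).
  rewrite -big_split; apply: eq_bigr => x _ /=.
  by rewrite big_distrr -big_split; apply: eq_bigr => u _ /=; rewrite mulrDr.
rewrite part1 part2 exprS; ring.
Qed.

Lemma t3_0l R Z V : t3 set0 R Z V = mulc R Z V.
Proof.
rewrite /t3 /mulc !ds0l set0U !sgn20l !mul1r /=.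
by [].
Qed.

Lemma F00 (X Y Z S V : sT) : F X Y Z 0 0 S V = (S == X)%:R * mulc Y Z V.
Proof.
rewrite /F (bigD1 (set0, set0)) //= big1 ?addr0; last first.
  move=> [Q Y1] /= h; rewrite /Fc /= !cards_eq0.
  case eQ: (Q == set0); case eY: (Y1 == set0); rewrite ?andbF ?fR ?(mul0r, mulr0) //.
  by move: h; rewrite (eqP eQ) (eqP eY) eqxx.
rewrite /Fc /= cards0 sub0set eqxx /= tR !mul1r sgn20r sgn20l mul1r setD0 t3_0l mulcA0.
by rewrite sub0set setD0 tR !mul1r.
Qed.

Lemma CR (X : sT) (a k : nat) (G : sT -> K) : #|X| = a -> (k <= a)%N ->
  \sum_(P : sT) ((P \subset X) && (#|P| == (a - k)%N))%:R * G P =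
  \sum_(Q : sT) ((Q \subset X) && (#|Q| == k))%:R * G (X :\: Q).
Proof.
move=> cX ka; rewrite !sumI (reindex_onto (fun Q => X :\: Q) (fun P => X :\: P)) /=; last first.
  by move=> P /andP[sPX _]; rewrite setDDr setDv set0U; apply/setIidPr.
apply: eq_bigl => Q; rewrite subsetDl /= setDDr setDv set0U.
case sQX: (Q \subset X).
  rewrite (setIidPr sQX) eqxx andbT cardsDS // cX.
  have hQ : (#|Q| <= a)%N by rewrite -cX; exact: subset_leq_card sQX.
  rewrite /=; apply/eqP/eqP; clear -hQ ka; move: hQ; move: #|Q| => q hQ; lia.
rewrite /=; apply/negbTE; rewrite negb_and; apply/orP; right; apply: contraFN sQX => /eqP <-; exact: subsetIl.
Qed.

Lemma Fkk (X Y Z S V : sT) (a k : nat) : #|X| = a -> #|Y| = k -> (k <= a)%N ->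
  F X Y Z k k S V = \sum_(P : sT) \sum_(Q : sT) comc (a - k) k X P Q * mulc P Y S * mulc Q Z V.
Proof.
move=> cX cY ka.
transitivity (\sum_(Q : sT) ((Q \subset X) && (#|Q| == k))%:R *
   (s (X :\: Q) (X :\: (X :\: Q)) * mulc (X :\: Q) Y S * mulc (X :\: (X :\: Q)) Z V)).
  rewrite /F -(pair_bigA _ (fun Q Y1 => Fc X Y k k Q Y1 * (mulc (X :\: Q) Y1 S * t3 Q (Y :\: Y1) Z V))).
  apply: eq_bigr => Q _ /=.
  rewrite (bigD1 Y) //= big1 ?addr0; last first.
    move=> Y1 h; rewrite /Fc.
    case e: ((Y1 \subset Y) && (#|Y1| == k)); last by rewrite fR !(mul0r, mulr0).
    move/andP: e => [sY /eqP cY1]; move: h; rewrite eqEcard sY cY cY1 leqnn.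
    by [].
  rewrite /Fc subxx cY eqxx setDv sgn20r t3_0m tR !mulr1.
  case sQX: (Q \subset X); last by rewrite /= fR !mul0r.
  by rewrite setDDr setDv set0U (setIidPr sQX); ring.
rewrite -(@CR X a k (fun P => s P (X :\: P) * mulc P Y S * mulc (X :\: P) Z V) cX ka).
apply: eq_bigr => P _.
rewrite (bigD1 (X :\: P)) //= big1 ?addr0; last first.
  by move=> Q /negbTE h; rewrite /comc eq_sym h !andbF !mul0r.
rewrite /comc subnK // cX eqxx eqxx /=.
case: (P \subset X); case: (#|P| == (a - k)%N); by rewrite /= ?tR ?fR ?mul1r ?mul0r.
Qed.


Lemma theta1_lin (a : nat) (I : finType) (c : I -> K) (f : I -> sT -> sT -> K) (S V : sT) :
  theta1 a (fun U W => \sum_i c i * f i U W) S V = \sum_i c i * theta1 a (f i) S V.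
Proof.
rewrite /theta1.
transitivity (\sum_(U : sT) \sum_(W : sT) \sum_(T : sT) \sum_i
   c i * (f i U W * comc a 1 U S T * mulc T W V)).
  apply: eq_bigr => U _; apply: eq_bigr => W _; apply: eq_bigr => T _.
  rewrite !big_distrl; apply: eq_bigr => i _ /=; ring.
transitivity (\sum_i \sum_(U : sT) \sum_(W : sT) \sum_(T : sT)
   c i * (f i U W * comc a 1 U S T * mulc T W V)); last first.
  apply: eq_bigr => i _; rewrite big_distrr; apply: eq_bigr => U _ /=.
  rewrite big_distrr; apply: eq_bigr => W _ /=.
  by rewrite big_distrr.
under eq_bigr => U _ do under eq_bigr => W _ do rewrite exchange_big.
under eq_bigr => U _ do rewrite exchange_big.
by rewrite exchange_big.
Qed.

Lemma triple_sum (G : sT -> sT -> sT -> K) :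
  \sum_(X : sT) \sum_(Y : sT) \sum_(Z : sT) G X Y Z = \sum_(p : sT * sT * sT) G p.1.1 p.1.2 p.2.
Proof. by rewrite pair_bigA pair_bigA. Qed.

Lemma sum_neq0 (I : finType) (G : I -> K) : \sum_i G i != 0 -> exists i, G i != 0.
Proof.
move=> h; case: (pickP (fun i => G i != 0)) => [i hi|h0]; first by exists i.
by move: h; rewrite big1 ?eqxx // => i _; move: (h0 i) => /negbFE/eqP.
Qed.

Lemma mul_neq0 (x y : K) : x * y != 0 -> x != 0 /\ y != 0.
Proof. by rewrite mulf_eq0 negb_or => /andP. Qed.

Lemma gamma_dec (a k : nat) (w : sT -> sT -> sT -> K) S V :
  gamma a k w S V = \sum_(p : sT * sT * sT) w p.1.1 p.1.2 p.2 *
    ((S == p.1.1)%:R * mulc p.1.2 p.2 V -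
     \sum_(P : sT) \sum_(Q : sT) comc (a - k) k p.1.1 P Q * mulc P p.1.2 S * mulc Q p.2 V).
Proof.
rewrite -(triple_sum (fun X Y Z => w X Y Z * ((S == X)%:R * mulc Y Z V -
     \sum_(P : sT) \sum_(Q : sT) comc (a - k) k X P Q * mulc P Y S * mulc Q Z V))).
rewrite /gamma /beta.
transitivity (\sum_(X : sT) \sum_(Y : sT) \sum_(Z : sT) w X Y Z * ((S == X)%:R * mulc Y Z V)
  - \sum_(X : sT) \sum_(Y : sT) \sum_(Z : sT) w X Y Z *
     \sum_(P : sT) \sum_(Q : sT) comc (a - k) k X P Q * mulc P Y S * mulc Q Z V); last first.
  rewrite -sumrB; apply: eq_bigr => X _; rewrite -sumrB; apply: eq_bigr => Y _.
  rewrite -sumrB; apply: eq_bigr => Z _; by rewrite mulrBr.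
congr (_ - _).
symmetry; rewrite (bigD1 S) //= [X in _ + X]big1 ?addr0; last first.
  move=> X /negbTE h; apply: big1 => Y _; apply: big1 => Z _.
  by rewrite eq_sym h fR mul0r mulr0.
apply: eq_bigr => Y _; apply: eq_bigr => Z _; by rewrite eqxx tR mul1r.
Qed.


Definition dco (k j : nat) : K := (-1) ^+ j / ('C(k, j) * (k - j))%:R.

Lemma main_triple (X Y Z : sT) (a k : nat) S V : [pchar K] =i pred0 ->
  #|X| = a -> #|Y| = k -> (k <= a)%N ->
  \sum_(j < k) dco k j * theta1 a (F X Y Z j j.+1) S V = F X Y Z 0 0 S V - F X Y Z k k S V.
Proof.
move=> hc cX cY ka.
have nz : forall m, (0 < m)%N -> (m%:R : K) != 0.
  by move=> m hm; rewrite ((pcharf0P K).1 hc) -lt0n.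
pose e i := - (('C(k, i))%:R^-1 * F X Y Z i i S V).
transitivity (\sum_(j < k) (e j.+1 - e j)); last first.
  rewrite -(big_mkord xpredT (fun j => e j.+1 - e j)) telescope_sumr // /e bin0 binn invr1.
  ring.
apply: eq_bigr => j _.
have jk : (j < k)%N := ltn_ord j.
rewrite thetaF ?cX ?cY; last by apply: leq_trans (ltnW jk) ka.
rewrite /dco /e natrM invfM.
set t := (-1) ^+ j.
have tt : t * t = 1 by rewrite /t -exprD addnn -mul2n exprM expr2 mulrNN mulr1 expr1n.
have hc1 : ('C(k, j))%:R != 0 :> K by apply: nz; rewrite bin_gt0 ltnW.
have hc2 : ('C(k, j.+1))%:R != 0 :> K by apply: nz; rewrite bin_gt0.
have hm : ((k - j)%:R : K) != 0 by apply: nz; rewrite subn_gt0.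
have rel0 : (j.+1)%:R * 'C(k, j.+1)%:R = (k - j)%:R * 'C(k, j)%:R :> K.
  by rewrite -!natrM mul_bin_left.
have rel : (j.+1)%:R = (k - j)%:R * 'C(k, j)%:R / 'C(k, j.+1)%:R :> K.
  by rewrite -rel0 mulfK.
rewrite rel.
transitivity ((t * t) * ('C(k, j)%:R^-1 * (k - j)%:R^-1 * ((k - j)%:R * F X Y Z j j S V -
   (k - j)%:R * 'C(k, j)%:R / 'C(k, j.+1)%:R * F X Y Z j.+1 j.+1 S V))); first by ring.
rewrite tt mul1r.
  by field; rewrite hc1 hc2 hm.
by [].
Qed.

End S.

Theorem lemma5p2 (K : fieldType) (n a b k : nat) :
  [pchar K] =i pred0 ->
  (0 < k)%N -> (k <= b)%N -> (b <= a)%N ->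
  forall w : {set 'I_n} -> {set 'I_n} -> {set 'I_n} -> K,
    hom3 a k (b - k) w ->
    exists y : {set 'I_n} -> {set 'I_n} -> K,
      hom2 (a + 1) (b - 1) y /\
      forall S V, theta1 a y S V = gamma a k w S V.
Proof.
move=> hc k0 kb ba w hw.
exists (fun U W => \sum_(p : {set 'I_n} * {set 'I_n} * {set 'I_n}) w p.1.1 p.1.2 p.2 *
   (\sum_(j < k) dco K k j * @F K n p.1.1 p.1.2 p.2 j j.+1 U W)).
split.
  move=> U W /sum_neq0 [[[X Y] Z] /mul_neq0 [/= wp /sum_neq0 [j /mul_neq0 [_ /sum_neq0 [[Q Y1] /mul_neq0 [hFc /mul_neq0 [hm ht]]]]]]].
  have [cX cY cZ] := hw _ _ _ wp.
  move: hFc; rewrite /Fc /=.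
  case e1: ((Q \subset X) && (#|Q| == j)); last by rewrite fR !mul0r eqxx.
  case e2: ((Y1 \subset Y) && (#|Y1| == j.+1)); last by rewrite fR !(mul0r, mulr0) eqxx.
  move=> _; move/andP: e1 => [sQ /eqP cQ]; move/andP: e2 => [sY1 /eqP cY1].
  have jk := ltn_ord j.
  rewrite (mulc_card hm) (t3_card ht) !cardsDS // cX cY cZ cQ cY1.
  split; lia.
move=> S V.
rewrite gamma_dec theta1_lin; apply: eq_bigr => -[[X Y] Z] _ /=.
have [->|wp] := eqVneq (w X Y Z) 0; first by rewrite !mul0r.
have [cX cY cZ] := hw _ _ _ wp.
congr (_ * _).
have ka : (k <= a)%N by apply: leq_trans kb ba.
rewrite theta1_lin (@main_triple K n X Y Z a k S V hc cX cY ka).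
by rewrite F00 (@Fkk K n X Y Z S V a k cX cY ka).
Qed.
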